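(* Let $\mathcal{E}\subseteq\mathrm{CL}(\mathbb{R})$ be hereditary. Then there exists $\mathcal{G}\subseteq C(\mathbb{R},\mathbb{R})$ such that $\mathcal{E}$ is the least element of $(\mathcal{K}_\mathcal{G},\subseteq)$.
   Context: $\mathrm{CL}(\mathbb{R})$ denotes the family of all closed subsets of $\mathbb{R}$ and $C(\mathbb{R},\mathbb{R})$ the set of all continuous functions $\mathbb{R}\to\mathbb{R}$. For $\mathcal{G}\subseteq C(\mathbb{R},\mathbb{R})$ let $R_\mathcal{G}=\{(f,E)\in C(\mathbb{R},\mathbb{R})\times\mathrm{CL}(\mathbb{R}):(\exists g\in\mathcal{G})\, f\restriction E=g\restriction E\}$. For $\mathcal{F}\subseteq C(\mathbb{R},\mathbb{R})$ put $E_\mathcal{G}(\mathcal{F})=\{E\in\mathrm{CL}(\mathbb{R}):(\forall f\in\mathcal{F})\,(f,E)\in R_\mathcal{G}\}$, and let $\mathcal{K}_\mathcal{G}=\{E_\mathcal{G}(\mathcal{F}):\mathcal{F}\subseteq C(\mathbb{R},\mathbb{R})\}$, ordered by inclusion (it is a complete lattice). A family $\mathcal{E}\subseteq\mathrm{CL}(\mathbb{R})$ is hereditary if for all $D,E\in\mathrm{CL}(\mathbb{R})$, $D\subseteq E\in\mathcal{E}$ implies $D\in\mathcal{E}$. *)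

(* Defs.v *)
From Stdlib Require Import Reals Rtopology.
Open Scope R_scope.

Definition is_C (f : R -> R) : Prop := continuity f.

Definition is_CL (E : R -> Prop) : Prop := closed_set E.

Definition subset (D E : R -> Prop) : Prop := forall x, D x -> E x.

Definition fam_in_C (G : (R -> R) -> Prop) : Prop := forall g, G g -> is_C g.

Definition fam_in_CL (F : (R -> Prop) -> Prop) : Prop := forall E, F E -> is_CL E.

Definition R_G (G : (R -> R) -> Prop) (f : R -> R) (E : R -> Prop) : Prop :=
  is_C f /\ is_CL E /\ exists g, G g /\ forall x, E x -> f x = g x.

Definition E_G (G : (R -> R) -> Prop) (F : (R -> R) -> Prop) (E : R -> Prop) : Prop :=
  is_CL E /\ forall f, F f -> R_G G f E.

Definition fam_eq (A B : (R -> Prop) -> Prop) : Prop :=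
  forall E, is_CL E -> (A E <-> B E).

Definition in_K_G (G : (R -> R) -> Prop) (A : (R -> Prop) -> Prop) : Prop :=
  fam_in_CL A /\ exists F, fam_in_C F /\ fam_eq A (E_G G F).

Definition least_in_K_G (G : (R -> R) -> Prop) (A : (R -> Prop) -> Prop) : Prop :=
  in_K_G G A /\ forall B, in_K_G G B -> forall E, A E -> B E.

Definition hereditary (A : (R -> Prop) -> Prop) : Prop :=
  forall D E, is_CL D -> is_CL E -> subset D E -> A E -> A D.

(* Main.v *)
Require Import Defs.
From Stdlib Require Import Reals Rtopology.
From Stdlib Require Import Cantor Lra Lia Classical ClassicalEpsilon ZArith.
Open Scope R_scope.


Lemma cont_eps (f : R -> R) (x : R) :
  continuity_pt f x <->
  (forall eps, 0 < eps -> exists d, 0 < d /\ forall y, Rabs (y - x) < d -> Rabs (f y - f x) < eps).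
Proof.
  unfold continuity_pt, continue_in, limit1_in, limit_in, D_x, no_cond; simpl; unfold R_dist.
  split.
  - intros H eps Heps. destruct (H eps Heps) as [d [Hd H1]]. exists d; split; [lra|].
    intros y Hy. destruct (Req_dec y x) as [->|Hne].
    + rewrite Rminus_diag, Rabs_R0; lra.
    + apply H1; split; auto.
  - intros H eps Heps. destruct (H eps Heps) as [d [Hd H1]]. exists d; split; [lra|].
    intros y [_ Hy]. apply H1; auto.
Qed.

Lemma lim_le (u : nat -> R) (l c r : R) (k : nat) :
  Un_cv u l -> (forall m, (m >= k)%nat -> Rabs (u m - c) <= r) -> Rabs (l - c) <= r.
Proof.
  intros Hcv Hb. destruct (Rle_or_lt (Rabs (l - c)) r) as [H|H]; auto.
  destruct (Hcv (Rabs (l - c) - r)) as [N HN]; [lra|].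
  specialize (HN (max N k) ltac:(lia)). specialize (Hb (max N k) ltac:(lia)).
  unfold R_dist in HN.
  pose proof (Rabs_triang (l - u (max N k)) (u (max N k) - c)).
  replace (l - u (max N k) + (u (max N k) - c)) with (l - c) in H0 by ring.
  rewrite <- Rabs_Ropp in HN. replace (- (u (max N k) - l)) with (l - u (max N k)) in HN by ring.
  lra.
Qed.

Definition Inv (a b : R) (E : R -> Prop) (p : R * R) : Prop :=
  E (fst p) /\ 0 < snd p /\ a < fst p - snd p /\ fst p + snd p < b.

Lemma baire (E : R -> Prop) (u : nat -> R) (a b x0 : R) :
  closed_set E -> E x0 -> a < x0 < b ->
  (forall x, E x -> a < x < b -> forall r, 0 < r -> exists z, E z /\ z <> x /\ Rabs (z - x) < r) ->
  exists y, E y /\ a < y < b /\ forall n, y <> u n.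
Proof.
  intros HE Hx0 Hab Hiso.
  assert (Hstep : forall (n : nat) (p : R * R), exists p' : R * R,
    Inv a b E p -> Inv a b E p' /\ Rabs (fst p' - fst p) + snd p' <= snd p /\
      snd p' <= snd p / 2 /\ snd p' < Rabs (fst p' - u n)).
  { intros n [c r].
    destruct (classic (Inv a b E (c, r))) as [Hi|Hi]; [|exists (0,0); tauto].
    destruct Hi as (Ec & Hr & H1 & H2); simpl in *.
    assert (Hc : exists c', E c' /\ Rabs (c' - c) < r / 2 /\ c' <> u n).
    { destruct (Req_dec c (u n)) as [Heq|Hne].
      - destruct (Hiso c Ec ltac:(lra) (r/2) ltac:(lra)) as [z (Ez & Hz & Hz2)].
        exists z; repeat split; auto. congruence.
      - exists c; rewrite Rminus_diag, Rabs_R0; repeat split; auto; lra. }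
    destruct Hc as [c' (Ec' & Hc1 & Hc2)].
    assert (Hpos : 0 < Rabs (c' - u n)) by (apply Rabs_pos_lt; intro; apply Hc2; lra).
    exists (c', Rmin ((r - Rabs (c' - c)) / 2) (Rabs (c' - u n) / 2)). intros _. simpl.
    assert (Hm1 := Rmin_l ((r - Rabs (c' - c)) / 2) (Rabs (c' - u n) / 2)).
    assert (Hm2 := Rmin_r ((r - Rabs (c' - c)) / 2) (Rabs (c' - u n) / 2)).
    assert (Hm3 : 0 < Rmin ((r - Rabs (c' - c)) / 2) (Rabs (c' - u n) / 2))
      by (apply Rmin_glb_lt; lra).
    set (r' := Rmin ((r - Rabs (c' - c)) / 2) (Rabs (c' - u n) / 2)) in *.
    pose proof (Rabs_pos (c' - c)).
    destruct (Rabs_def2 (c' - c) (r/2)) as [? ?]; auto.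
    unfold Inv; simpl; repeat split; auto; try lra. }
  set (stepf := fun n p => proj1_sig (constructive_indefinite_description _ (Hstep n p))).
  assert (Hsf : forall n p, Inv a b E p -> Inv a b E (stepf n p) /\
      Rabs (fst (stepf n p) - fst p) + snd (stepf n p) <= snd p /\
      snd (stepf n p) <= snd p / 2 /\ snd (stepf n p) < Rabs (fst (stepf n p) - u n)).
  { intros n p. unfold stepf. destruct (constructive_indefinite_description _ _) as [q Hq]. exact Hq. }
  set (r0 := Rmin (x0 - a) (b - x0) / 2).
  assert (Hr0 : 0 < r0) by (unfold r0;
    pose proof (Rmin_glb_lt (x0 - a) (b - x0) 0 ltac:(lra) ltac:(lra)); lra).
  set (S := fix S (k : nat) : R * R := match k with O => (x0, r0) | Datatypes.S k' => stepf k' (S k') end).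
  assert (HI : forall k, Inv a b E (S k)).
  { induction k.
    - simpl. unfold Inv; simpl. repeat split; auto.
      + pose proof (Rmin_l (x0 - a) (b - x0)); unfold r0; lra.
      + pose proof (Rmin_r (x0 - a) (b - x0)); unfold r0; lra.
    - simpl. apply Hsf; auto. }
  assert (Hnest : forall m k, Rabs (fst (S (k + m)%nat) - fst (S k)) + snd (S (k + m)%nat) <= snd (S k)).
  { induction m; intros k.
    - rewrite Nat.add_0_r, Rminus_diag, Rabs_R0; lra.
    - replace (k + Datatypes.S m)%nat with (Datatypes.S (k + m)) by lia. simpl.
      destruct (Hsf (k + m)%nat (S (k + m)%nat) (HI _)) as (_ & H1 & _).
      specialize (IHm k).
      pose proof (Rabs_triang (fst (stepf (k + m)%nat (S (k + m)%nat)) - fst (S (k + m)%nat))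
                              (fst (S (k + m)%nat) - fst (S k))).
      replace (fst (stepf (k + m)%nat (S (k + m)%nat)) - fst (S (k + m)%nat) +
               (fst (S (k + m)%nat) - fst (S k))) with
              (fst (stepf (k + m)%nat (S (k + m)%nat)) - fst (S k)) in H by ring.
      lra. }
  assert (Hrad : forall k, snd (S k) <= r0 * (/2) ^ k).
  { induction k.
    - simpl; lra.
    - simpl. destruct (Hsf k (S k) (HI _)) as (_ & _ & H2 & _). lra. }
  assert (Hsmall : forall eps, 0 < eps -> exists N, forall k, (k >= N)%nat -> snd (S k) < eps).
  { intros eps Heps. destruct (pow_lt_1_zero (/2) ltac:(rewrite Rabs_right; lra) (eps / r0))
      as [N HN]. { apply Rdiv_lt_0_compat; lra. }
    exists N. intros k Hk. specialize (HN k Hk). specialize (Hrad k).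
    rewrite Rabs_right in HN by (apply Rle_ge, pow_le; lra).
    apply Rmult_lt_compat_l with (r := r0) in HN; auto.
    replace (r0 * (eps / r0)) with eps in HN by (field; lra). lra. }
  assert (Hcau : Cauchy_crit (fun k => fst (S k))).
  { intros eps Heps. destruct (Hsmall (eps / 2)) as [N HN]; [lra|]. exists N.
    intros n m Hn Hm. unfold R_dist.
    pose proof (Hnest (n - N)%nat N) as A1. pose proof (Hnest (m - N)%nat N) as A2.
    replace (N + (n - N))%nat with n in A1 by lia. replace (N + (m - N))%nat with m in A2 by lia.
    pose proof (HI n) as [_ [Hn' _]]. pose proof (HI m) as [_ [Hm' _]].
    specialize (HN N (le_n _)).
    pose proof (Rabs_triang (fst (S n) - fst (S N)) (fst (S N) - fst (S m))).
    replace (fst (S n) - fst (S N) + (fst (S N) - fst (S m))) with (fst (S n) - fst (S m)) in H by ring.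
    rewrite <- Rabs_Ropp in A2. replace (- (fst (S m) - fst (S N))) with (fst (S N) - fst (S m)) in A2 by ring.
    lra. }
  destruct (R_complete _ Hcau) as [y Hy].
  assert (Hclose : forall k, Rabs (y - fst (S k)) <= snd (S k)).
  { intros k. apply (lim_le _ _ _ _ k Hy). intros m Hm.
    pose proof (Hnest (m - k)%nat k) as A. replace (k + (m - k))%nat with m in A by lia.
    pose proof (HI m) as [_ [? _]]. lra. }
  exists y. split; [|split].
  - destruct (classic (E y)) as [?|Hn]; auto. exfalso.
    destruct (HE y Hn) as [d Hd].
    destruct (Hsmall d (cond_pos d)) as [N HN].
    apply (Hd (fst (S N))). 2: apply (HI N).
    unfold disc. rewrite <- Rabs_Ropp. replace (- (fst (S N) - y)) with (y - fst (S N)) by ring.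
    specialize (Hclose N). specialize (HN N (le_n _)). lra.
  - specialize (Hclose O). simpl in Hclose.
    pose proof (Rmin_l (x0 - a) (b - x0)); pose proof (Rmin_r (x0 - a) (b - x0)).
    revert Hclose; unfold Rabs; destruct (Rcase_abs _); intros; unfold r0 in *; split; lra.
  - intros n Heq. subst y.
    pose proof (Hclose (Datatypes.S n)). simpl in H.
    destruct (Hsf n (S n) (HI _)) as (_ & _ & _ & H4).
    rewrite <- Rabs_Ropp in H4. replace (- (fst (stepf n (S n)) - u n)) with (u n - fst (stepf n (S n))) in H4 by ring.
    lra.
Qed.


Lemma avoid (u : nat -> R) (a b : R) : a < b -> exists t, a < t < b /\ forall n, t <> u n.
Proof.
  intros Hab.
  destruct (baire (fun _ => True) u a b ((a + b) / 2)) as [y (_ & Hy & Hn)]; auto; try lra.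
  - intros x Hx. exfalso; apply Hx; exact I.
  - intros x _ _ r Hr. exists (x + r / 2). repeat split; try lra.
    replace (x + r / 2 - x) with (r / 2) by ring. rewrite Rabs_right; lra.
  - exists y; auto.
Qed.

Definition e (n : nat) : R :=
  let (i, j) := of_nat n in let (p, q) := of_nat i in (INR p - INR q) / INR (S j).

Lemma Z2N_np (k : Z) : (k <= 0)%Z -> Z.to_nat k = 0%nat.
Proof. destruct k; simpl; auto; lia. Qed.

Lemma IZR_split (k : Z) : IZR k = INR (Z.to_nat k) - INR (Z.to_nat (- k)).
Proof.
  destruct (Z_le_gt_dec 0 k).
  - rewrite (Z2N_np (-k)) by lia. rewrite (INR_IZR_INZ (Z.to_nat k)), Z2Nat.id by lia. simpl. ring.
  - rewrite (Z2N_np k) by lia. rewrite (INR_IZR_INZ (Z.to_nat (-k))), Z2Nat.id by lia. simpl.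
    rewrite opp_IZR. ring.
Qed.

Lemma e_dense (a b : R) : a < b -> exists n, a < e n < b.
Proof.
  intros Hab.
  destruct (archimed (/ (b - a))) as [H1 _].
  set (j := Z.to_nat (up (/ (b - a)))).
  assert (Hj : / (b - a) < INR (S j)).
  { rewrite S_INR. unfold j.
    destruct (Z_le_gt_dec 0 (up (/ (b - a)))).
    - rewrite INR_IZR_INZ, Z2Nat.id by lia. lra.
    - assert (0 < / (b - a)) by (apply Rinv_0_lt_compat; lra).
      assert (IZR (up (/ (b - a))) <= 0) by (apply IZR_le; lia). lra. }
  assert (HS : 0 < INR (S j)) by (apply lt_0_INR; lia).
  assert (Hj' : 1 < (b - a) * INR (S j)).
  { apply Rmult_lt_compat_l with (r := b - a) in Hj; [|lra].
    rewrite Rinv_r in Hj by lra. lra. }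
  destruct (archimed (a * INR (S j))) as [H2 H3].
  set (k := up (a * INR (S j))) in *.
  exists (to_nat (to_nat (Z.to_nat k, Z.to_nat (- k)), j)).
  unfold e. rewrite !cancel_of_to. rewrite <- IZR_split.
  split.
  - apply Rmult_lt_reg_r with (r := INR (S j)); auto.
    unfold Rdiv. rewrite Rmult_assoc, Rinv_l by lra. lra.
  - apply Rmult_lt_reg_r with (r := INR (S j)); auto.
    unfold Rdiv. rewrite Rmult_assoc, Rinv_l by lra. nra.
Qed.

Lemma least_ex (P : nat -> Prop) : (exists n, P n) -> exists n, P n /\ forall m, (m < n)%nat -> ~ P m.
Proof.
  intros [n Hn]. revert Hn. induction n as [n IH] using (well_founded_induction lt_wf).
  intros Hn. destruct (classic (exists m, (m < n)%nat /\ P m)) as [[m [Hm1 Hm2]]|Hno].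
  - apply (IH m Hm1 Hm2).
  - exists n. split; auto. intros m Hm HP. apply Hno; eauto.
Qed.


Definition h (n : nat) : R := / INR (S n).

Lemma h_pos n : 0 < h n.
Proof. unfold h. apply Rinv_0_lt_compat, lt_0_INR; lia. Qed.

Lemma h_small (eps : R) : 0 < eps -> exists N, forall n, (n >= N)%nat -> h n < eps.
Proof.
  intros He. destruct (archimed (/ eps)) as [H1 _].
  exists (Z.to_nat (up (/ eps))). intros n Hn. unfold h.
  assert (Hinv : 0 < / eps) by (apply Rinv_0_lt_compat; auto).
  assert (/ eps < INR (S n)).
  { apply le_INR in Hn. rewrite S_INR.
    destruct (Z_le_gt_dec 0 (up (/ eps))).
    - rewrite INR_IZR_INZ, Z2Nat.id in Hn by lia. lra.
    - assert (IZR (up (/ eps)) <= 0) by (apply IZR_le; lia). pose proof (pos_INR n). lra. }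
  rewrite <- (Rinv_inv eps). apply Rinv_lt_contravar; auto.
  apply Rmult_lt_0_compat; auto. lra.
Qed.

Definition pp (y : R) : R := (y + Rabs y) / 2.

Lemma pp_nonpos y : y <= 0 -> pp y = 0.
Proof. intros. unfold pp. rewrite Rabs_left1 by auto. lra. Qed.
Lemma pp_nonneg y : 0 <= y -> pp y = y.
Proof. intros. unfold pp. rewrite Rabs_right by lra. lra. Qed.
Lemma pp_ge0 y : 0 <= pp y.
Proof. unfold pp. pose proof (Rle_abs (-y)). rewrite Rabs_Ropp in H. lra. Qed.
Lemma pp_le y : y <= 1 -> pp y <= 1.
Proof. intros. unfold pp. unfold Rabs; destruct (Rcase_abs _); lra. Qed.

Lemma pp_lip a b : Rabs (pp a - pp b) <= Rabs (a - b).
Proof.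
  destruct (Rle_or_lt 0 a); destruct (Rle_or_lt 0 b);
  [rewrite (pp_nonneg a), (pp_nonneg b) by lra| rewrite (pp_nonneg a), (pp_nonpos b) by lra
  |rewrite (pp_nonpos a), (pp_nonneg b) by lra| rewrite (pp_nonpos a), (pp_nonpos b) by lra];
  unfold Rabs; repeat destruct (Rcase_abs _); lra.
Qed.

Lemma lip_cont (f : R -> R) (x K : R) : 0 <= K ->
  (forall y, Rabs (f y - f x) <= K * Rabs (y - x)) -> continuity_pt f x.
Proof.
  intros HK H. apply cont_eps. intros eps He. exists (eps / (K + 1)). split.
  - apply Rdiv_lt_0_compat; lra.
  - intros y Hy. eapply Rle_lt_trans; [apply H|].
    apply Rle_lt_trans with ((K + 1) * Rabs (y - x)).
    + pose proof (Rabs_pos (y - x)); nra.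
    + apply Rmult_lt_compat_l with (r := K + 1) in Hy; [|lra].
      replace ((K + 1) * (eps / (K + 1))) with eps in Hy by (field; lra). lra.
Qed.

Definition isol (E : R -> Prop) (x : R) : Prop :=
  exists r, 0 < r /\ forall z, E z -> Rabs (z - x) < r -> z = x.

Definition good (E : R -> Prop) (n : nat) : Prop :=
  E (e n) /\ isol E (e n) /\ forall m, (m < n)%nat -> e m <> e n.

Definition rad (E : R -> Prop) (n : nat) : R :=
  match excluded_middle_informative (good E n) with
  | left H => proj1_sig (constructive_indefinite_description _ (proj1 (proj2 H))) / 2
  | right _ => 1
  end.

Lemma rad_pos E n : 0 < rad E n.
Proof.
  unfold rad. destruct (excluded_middle_informative _) as [H|H]; [|lra].
  pose proof (proj2_sig (constructive_indefinite_description _ (proj1 (proj2 H)))) as [Hr _]. lra.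
Qed.

Lemma rad_spec E n : good E n -> forall z, E z -> Rabs (z - e n) < 2 * rad E n -> z = e n.
Proof.
  intros Hg. unfold rad. destruct (excluded_middle_informative _) as [H|H]; [|tauto].
  pose proof (proj2_sig (constructive_indefinite_description _ (proj1 (proj2 H)))) as [Hr Hr2].
  intros z Hz Hd. apply Hr2; auto. lra.
Qed.

Definition bump (E : R -> Prop) (n : nat) (x : R) : R :=
  h n * pp (1 - Rabs (x - e n) / rad E n).

Lemma bump_cont E n x : continuity_pt (bump E n) x.
Proof.
  apply (lip_cont _ _ (h n / rad E n)).
  - pose proof (h_pos n); pose proof (rad_pos E n). apply Rlt_le, Rdiv_lt_0_compat; auto.
  - intros y. unfold bump. pose proof (h_pos n); pose proof (rad_pos E n).
    rewrite <- Rmult_minus_distr_l, Rabs_mult, (Rabs_right (h n)) by lra.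
    unfold Rdiv. rewrite Rmult_assoc. apply Rmult_le_compat_l; [lra|].
    eapply Rle_trans; [apply pp_lip|].
    replace (1 - Rabs (y - e n) * / rad E n - (1 - Rabs (x - e n) * / rad E n))
      with ((Rabs (x - e n) - Rabs (y - e n)) * / rad E n) by ring.
    rewrite Rabs_mult, (Rabs_right (/ rad E n)) by (apply Rle_ge, Rlt_le, Rinv_0_lt_compat; auto).
    rewrite Rmult_comm. apply Rmult_le_compat_l.
    + apply Rlt_le, Rinv_0_lt_compat; auto.
    + pose proof (Rabs_triang_inv2 (x - e n) (y - e n)).
      replace (x - e n - (y - e n)) with (- (y - x)) in H1 by ring.
      rewrite Rabs_Ropp in H1. idtac.
      exact H1.
Qed.

Lemma bump_bounds E n x : 0 <= bump E n x <= h n.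
Proof.
  unfold bump. pose proof (h_pos n). pose proof (rad_pos E n).
  assert (0 <= Rabs (x - e n) / rad E n) by (unfold Rdiv; apply Rmult_le_pos; [apply Rabs_pos|apply Rlt_le, Rinv_0_lt_compat; auto]).
  pose proof (pp_ge0 (1 - Rabs (x - e n) / rad E n)).
  pose proof (pp_le (1 - Rabs (x - e n) / rad E n) ltac:(lra)). nra.
Qed.

Lemma bump_zero E n x : rad E n <= Rabs (x - e n) -> bump E n x = 0.
Proof.
  intros H. unfold bump. rewrite pp_nonpos; [ring|].
  pose proof (rad_pos E n).
  assert (1 <= Rabs (x - e n) / rad E n).
  { apply (Rmult_le_reg_r (rad E n)); auto. unfold Rdiv. rewrite Rmult_assoc, Rinv_l by lra. lra. }
  lra.
Qed.

Definition fE (E : R -> Prop) (x : R) : R :=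
  match excluded_middle_informative (exists n, good E n /\ Rabs (x - e n) < rad E n) with
  | left H => bump E (proj1_sig (constructive_indefinite_description _ H)) x
  | right _ => 0
  end.

Lemma disj E n m x : good E n -> good E m -> Rabs (x - e n) < rad E n -> Rabs (x - e m) < rad E m -> n = m.
Proof.
  intros Gn Gm Hn Hm.
  assert (Heq : e n = e m).
  { pose proof (Rabs_triang (e m - x) (x - e n)).
    replace (e m - x + (x - e n)) with (e m - e n) in H by ring.
    rewrite (Rabs_minus_sym (e m) x) in H.
    destruct (Rle_or_lt (rad E m) (rad E n)).
    - symmetry. apply (rad_spec E n Gn); [apply Gm|]. lra.
    - apply (rad_spec E m Gm); [apply Gn|]. rewrite (Rabs_minus_sym (e n)). lra. }
  destruct (lt_eq_lt_dec n m) as [[Hlt|Heq']|Hlt]; auto.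
  - exfalso. apply (proj2 (proj2 Gm) n Hlt Heq).
  - exfalso. apply (proj2 (proj2 Gn) m Hlt (eq_sym Heq)).
Qed.

Lemma fE_in E n x : good E n -> Rabs (x - e n) < rad E n -> fE E x = bump E n x.
Proof.
  intros G H. unfold fE. destruct (excluded_middle_informative _) as [H'|H'].
  - destruct (constructive_indefinite_description _ _) as [m [Gm Hm]]. simpl.
    rewrite (disj E m n x); auto.
  - exfalso; apply H'; eauto.
Qed.

Lemma fE_out E x : (forall n, good E n -> rad E n <= Rabs (x - e n)) -> fE E x = 0.
Proof.
  intros H. unfold fE. destruct (excluded_middle_informative _) as [H'|H']; auto.
  destruct (constructive_indefinite_description _ _) as [m [Gm Hm]]. simpl.
  specialize (H m Gm). lra.
Qed.

Lemma fE_cases E x : fE E x = 0 \/ exists n, good E n /\ Rabs (x - e n) < rad E n /\ fE E x = bump E n x.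
Proof.
  destruct (classic (exists n, good E n /\ Rabs (x - e n) < rad E n)) as [[n [G H]]|H].
  - right. exists n. split; [|split]; auto. apply fE_in; auto.
  - left. apply fE_out. intros n G. destruct (Rle_or_lt (rad E n) (Rabs (x - e n))); auto.
    exfalso; eauto.
Qed.

Lemma fE_cont E x : continuity_pt (fE E) x.
Proof.
  destruct (classic (exists n, good E n /\ Rabs (x - e n) < rad E n)) as [[n [G H]]|H].
  - apply (continuity_pt_locally_ext (bump E n) _ (rad E n - Rabs (x - e n))); [lra| |apply bump_cont].
    intros y Hy. unfold Rdist in Hy. symmetry. apply fE_in; auto.
    pose proof (Rabs_triang (y - x) (x - e n)). replace (y - x + (x - e n)) with (y - e n) in H0 by ring. lra.
  - assert (Hx : fE E x = 0).
    { apply fE_out. intros n G. destruct (Rle_or_lt (rad E n) (Rabs (x - e n))); auto. exfalso; eauto. }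
    apply cont_eps. intros eps He. destruct (h_small eps He) as [N HN].
    assert (Hfin : forall K, exists d, 0 < d /\ forall n, (n < K)%nat -> good E n ->
               forall y, Rabs (y - x) < d -> Rabs (bump E n y) < eps).
    { induction K.
      - exists 1. split; [lra|]. intros; lia.
      - destruct IHK as [d [Hd HK]].
        destruct (classic (good E K)) as [G|G].
        + assert (Hz : bump E K x = 0).
          { apply bump_zero. destruct (Rle_or_lt (rad E K) (Rabs (x - e K))); auto. exfalso; eauto. }
          destruct (proj1 (cont_eps _ _) (bump_cont E K x) eps He) as [d' [Hd' HK']].
          exists (Rmin d d'). split; [apply Rmin_glb_lt; auto|].
          intros n Hn Gn y Hy.
          destruct (Nat.eq_dec n K) as [->|Hne].
          * specialize (HK' y ltac:(pose proof (Rmin_r d d'); lra)). rewrite Hz, Rminus_0_r in HK'. auto.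
          * apply HK; auto. lia. pose proof (Rmin_l d d'); lra.
        + exists d. split; auto. intros n Hn Gn y Hy.
          destruct (Nat.eq_dec n K) as [->|Hne]; [tauto|]. apply HK; auto. lia. }
    destruct (Hfin N) as [d [Hd Hd2]]. exists d. split; auto.
    intros y Hy. rewrite Hx, Rminus_0_r.
    destruct (fE_cases E y) as [->|[m (Gm & Hm & ->)]].
    + rewrite Rabs_R0; auto.
    + destruct (lt_dec m N).
      * apply Hd2; auto.
      * pose proof (bump_bounds E m y). specialize (HN m ltac:(lia)).
        rewrite Rabs_right; lra.
Qed.

Lemma fE_iso E x n0 : E x -> isol E x -> e n0 = x -> (forall m, (m < n0)%nat -> e m <> x) -> fE E x = h n0.
Proof.
  intros Ex Ix Hn0 Hmin.
  assert (G : good E n0) by (unfold good; rewrite Hn0; repeat split; auto).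
  rewrite (fE_in E n0 x G).
  - unfold bump. rewrite Hn0, Rminus_diag, Rabs_R0. unfold Rdiv. rewrite Rmult_0_l, Rminus_0_r.
    rewrite pp_nonneg by lra. ring.
  - rewrite Hn0, Rminus_diag, Rabs_R0. apply rad_pos.
Qed.

Lemma fE_nr E x : E x -> (forall n, e n <> x) -> fE E x = 0.
Proof.
  intros Ex Hn. apply fE_out. intros n G.
  destruct (Rle_or_lt (rad E n) (Rabs (x - e n))); auto.
  exfalso. apply (Hn n). symmetry. apply (rad_spec E n G); auto. pose proof (rad_pos E n). lra.
Qed.


Definition okpt (g : R -> R) (x : R) : Prop :=
  ((forall n, e n <> x) -> g x <> 0) /\ (forall n, e n = x -> g x <> h n).

Lemma reject (E D : R -> Prop) (g : R -> R) :
  closed_set E -> closed_set D -> (exists x0, E x0 /\ ~ D x0) ->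
  (forall x, ~ D x -> okpt g x) -> ~ (forall x, E x -> fE E x = g x).
Proof.
  intros HE HD [x0 [Ex0 Dx0]] Hok Hag.
  destruct (HD x0 Dx0) as [d Hd].
  assert (Hin : forall x, x0 - d < x < x0 + d -> ~ D x).
  { intros x Hx. apply Hd. unfold disc. apply Rabs_def1; lra. }
  pose proof (cond_pos d) as Hdp.
  destruct (classic (exists x, E x /\ x0 - d < x < x0 + d /\ isol E x)) as [[x (Ex & Hx & Ix)]|Hno].
  - specialize (Hok x (Hin x Hx)) as [Ok1 Ok2].
    destruct (classic (exists n, e n = x)) as [Hr|Hr].
    + destruct (least_ex _ Hr) as [n0 [Hn0 Hmin]].
      apply (Ok2 n0 Hn0). rewrite <- (Hag x Ex). apply fE_iso; auto.
    + apply Ok1; [intros n Hn; apply Hr; eauto|].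
      rewrite <- (Hag x Ex). apply fE_nr; auto. intros n Hn; apply Hr; eauto.
  - destruct (baire E e (x0 - d) (x0 + d) x0 HE Ex0 ltac:(lra)) as [y (Ey & Hy & Hny)].
    + intros x Ex Hx r Hr. apply NNPP. intro Hc. apply Hno. exists x. split; auto. split; auto.
      exists r. split; auto. intros z Ez Hz. apply NNPP. intro Hzx. apply Hc. exists z. auto.
    + specialize (Hok y (Hin y Hy)) as [Ok1 _].
      apply Ok1; [intros n Hn; apply (Hny n); auto|].
      rewrite <- (Hag y Ey). apply fE_nr; auto.
Qed.


Definition okw (w : nat -> R) (F : R -> R) (x : R) : Prop :=
  ((forall n, e n <> x) -> F x <> 0) /\ (forall n, e n = x -> F x <> w n).

Definition fill_ok (w : nat -> R) (a b fa fb : R) (F : R -> R) : Prop :=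
  continuity F /\ F a = fa /\ F b = fb /\ (forall x, a < x < b -> okw w F x) /\
  (forall x v, a < x < b -> Rabs (F x - v) <= 9 * Rmax (Rabs (fa - v)) (Rabs (fb - v)) + (b - a)).

Lemma conv_bound (fa fb v l : R) : 0 <= l <= 1 ->
  Rabs (fa + (fb - fa) * l - v) <= Rmax (Rabs (fa - v)) (Rabs (fb - v)).
Proof.
  intros Hl.
  replace (fa + (fb - fa) * l - v) with ((1 - l) * (fa - v) + l * (fb - v)) by ring.
  eapply Rle_trans; [apply Rabs_triang|]. rewrite !Rabs_mult, (Rabs_right (1 - l)), (Rabs_right l) by lra.
  pose proof (Rmax_l (Rabs (fa - v)) (Rabs (fb - v))). pose proof (Rmax_r (Rabs (fa - v)) (Rabs (fb - v))).
  nra.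
Qed.

Lemma filler_pos (w : nat -> R) a b fa fb : a < b -> 0 <= fa -> 0 <= fb ->
  exists F, fill_ok w a b fa fb F /\ forall x, a < x < b -> 0 < F x.
Proof.
  intros Hab Ha Hb.
  set (L := fun x => fa + (fb - fa) * ((x - a) / (b - a))).
  destruct (avoid (fun n => (w n - L (e n)) / ((e n - a) * (b - e n))) 0 (/ (b - a)))
    as [t [Ht Hu]]. { apply Rinv_0_lt_compat; lra. }
  exists (fun x => L x + t * ((x - a) * (b - x))).
  assert (Hl : forall x, a < x < b -> 0 <= (x - a) / (b - a) <= 1).
  { intros x Hx. split; [apply Rlt_le, Rdiv_lt_0_compat; lra|].
    apply (Rmult_le_reg_r (b - a)); [lra|]. unfold Rdiv. rewrite Rmult_assoc, Rinv_l by lra. lra. }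
  assert (Hpos : forall x, a < x < b -> 0 < L x + t * ((x - a) * (b - x))).
  { intros x Hx. specialize (Hl x Hx). unfold L.
    assert (0 < (x - a) * (b - x)) by (apply Rmult_lt_0_compat; lra).
    assert (0 < t * ((x - a) * (b - x))) by (apply Rmult_lt_0_compat; lra). nra. }
  split; [split; [|split; [|split; [|split]]]|]; auto.
  - unfold L. reg.
  - unfold L. unfold Rdiv. ring.
  - unfold L. field. lra.
  - intros x Hx. split.
    + intros _. specialize (Hpos x Hx). lra.
    + intros n Hn Heq. apply (Hu n). subst x.
      assert (0 < (e n - a) * (b - e n)) by (apply Rmult_lt_0_compat; lra).
      rewrite <- Heq. field. lra.
  - intros x v Hx.
    replace (L x + t * ((x - a) * (b - x)) - v) with ((L x - v) + t * ((x - a) * (b - x))) by ring.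
    eapply Rle_trans; [apply Rabs_triang|].
    pose proof (conv_bound fa fb v _ (Hl x Hx)). fold (L x) in H.
    pose proof (Rmax_l (Rabs (fa - v)) (Rabs (fb - v))). pose proof (Rabs_pos (fa - v)).
    assert (Rabs (t * ((x - a) * (b - x))) <= b - a).
    { rewrite Rabs_right by (apply Rle_ge, Rmult_le_pos; [lra|apply Rmult_le_pos; lra]).
      assert (t * (b - a) <= 1).
      { apply (Rmult_le_reg_r (/ (b - a))). apply Rinv_0_lt_compat; lra.
        rewrite Rmult_assoc, Rinv_r, Rmult_1_r by lra. rewrite Rmult_1_l. lra. }
      assert ((x - a) * (b - x) <= (b - a) * (b - a)) by nra. nra. }
    lra.
Qed.

Lemma filler_cross (w : nat -> R) (Hw : forall n, w n <> 0) a b fa fb : a < b -> fa < 0 -> 0 < fb ->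
  exists F, fill_ok w a b fa fb F.
Proof.
  intros Hab Ha Hb.
  destruct (e_dense ((3 * a + b) / 4) ((a + 3 * b) / 4)) as [k Hk]; [lra|].
  set (r := e k) in *.
  set (ma := (- fa) / (r - a)). set (mb := fb / (b - r)).
  assert (Hma : 0 < ma) by (unfold ma; apply Rdiv_lt_0_compat; lra).
  assert (Hmb : 0 < mb) by (unfold mb; apply Rdiv_lt_0_compat; lra).
  assert (Ema : ma * (r - a) = - fa) by (unfold ma; field; lra).
  assert (Emb : mb * (b - r) = fb) by (unfold mb; field; lra).
  set (m := fun x => ma + (mb - ma) * ((x - a) / (b - a))).
  destruct (avoid (fun n => (w n / (e n - r) - m (e n)) / ((e n - a) * (b - e n))) 0 (/ ((b - a) * (b - a))))
    as [t [Ht Hu]]. { apply Rinv_0_lt_compat; nra. }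
  assert (Ht2 : t * ((b - a) * (b - a)) <= 1).
  { apply (Rmult_le_reg_r (/ ((b - a) * (b - a)))). apply Rinv_0_lt_compat; nra.
    rewrite Rmult_assoc, Rinv_r, Rmult_1_r by nra. rewrite Rmult_1_l. lra. }
  exists (fun x => (x - r) * (m x + t * ((x - a) * (b - x)))).
  assert (Hl : forall x, a < x < b -> 0 <= (x - a) / (b - a) <= 1).
  { intros x Hx. split; [apply Rlt_le, Rdiv_lt_0_compat; lra|].
    apply (Rmult_le_reg_r (b - a)); [lra|]. unfold Rdiv. rewrite Rmult_assoc, Rinv_l by lra. lra. }
  assert (HM : forall x, a < x < b -> 0 < m x + t * ((x - a) * (b - x))).
  { intros x Hx. specialize (Hl x Hx). unfold m.
    assert (0 < (x - a) * (b - x)) by (apply Rmult_lt_0_compat; lra).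
    assert (0 < t * ((x - a) * (b - x))) by (apply Rmult_lt_0_compat; lra). nra. }
  split; [|split; [|split; [|split]]].
  - unfold m. reg.
  - unfold m. unfold Rdiv. replace ((a - a) * / (b - a)) with 0 by ring. nra.
  - unfold m. replace ((b - a) / (b - a)) with 1 by (field; lra). nra.
  - intros x Hx. split.
    + intros Hn Hz. specialize (HM x Hx). apply Rmult_integral in Hz as [Hz|Hz]; [|lra].
      apply (Hn k). unfold r in Hz. lra.
    + intros n Hn Heq. subst x. destruct (Req_dec (e n) r) as [Er|Er].
      * apply (Hw n). rewrite <- Heq, Er. ring.
      * apply (Hu n).
        assert (0 < (e n - a) * (b - e n)) by (apply Rmult_lt_0_compat; lra).
        assert (e n - r <> 0) by lra.
        rewrite <- Heq. field. split; lra.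
  - intros x v Hx. specialize (Hl x Hx). specialize (HM x Hx).
    set (l := (x - a) / (b - a)) in *.
    set (T := t * ((x - a) * (b - x))).
    assert (HT : 0 <= T) by (unfold T; apply Rmult_le_pos; [lra|apply Rmult_le_pos; lra]).
    assert (Hq : Rabs (x - r) <= 3 * (b - a) / 4) by (apply Rabs_le; lra).
    assert (Hq1 : Rabs (x - r) <= 3 * (r - a)) by lra.
    assert (Hq2 : Rabs (x - r) <= 3 * (b - r)) by lra.
    assert (Hq3 : Rabs (x - r) <= b - a) by lra.
    assert (HqT : Rabs (x - r) * T <= b - a).
    { unfold T. assert ((x - a) * (b - x) <= (b - a) * (b - a)) by nra.
      assert (t * ((x - a) * (b - x)) <= 1) by nra. pose proof (Rabs_pos (x - r)). nra. }
    assert (HF : Rabs ((x - r) * (m x + T)) <= 3 * (- fa) * (1 - l) + 3 * fb * l + (b - a)).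
    { rewrite Rabs_mult, (Rabs_right (m x + T)) by (unfold T; lra). unfold m; fold l.
      replace (ma + (mb - ma) * l) with (ma * (1 - l) + mb * l) by ring.
      pose proof (Rabs_pos (x - r)).
      assert (Rabs (x - r) * ma <= 3 * (- fa)) by nra.
      assert (Rabs (x - r) * mb <= 3 * fb) by nra.
      nra. }
    set (A := Rabs (fa - v)). set (B := Rabs (fb - v)).
    pose proof (Rmax_l A B). pose proof (Rmax_r A B).
    assert (HA : fa - v <= A /\ v - fa <= A) by (unfold A; split; [apply Rle_abs|rewrite Rabs_minus_sym; apply Rle_abs]).
    assert (HB : fb - v <= B /\ v - fb <= B) by (unfold B; split; [apply Rle_abs|rewrite Rabs_minus_sym; apply Rle_abs]).
    assert (Hv : Rabs v <= Rmax A B) by (apply Rabs_le; lra).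
    eapply Rle_trans.
    { replace ((x - r) * (m x + t * ((x - a) * (b - x))) - v) with ((x - r) * (m x + T) + - v) by (unfold T; ring).
      apply Rabs_triang. }
    rewrite Rabs_Ropp.
    assert (- fa <= 2 * Rmax A B) by lra. assert (fb <= 2 * Rmax A B) by lra.
    nra.
Qed.

Lemma filler (w : nat -> R) (Hw : forall n, w n <> 0) a b fa fb : a < b ->
  exists F, fill_ok w a b fa fb F.
Proof.
  intros Hab.
  assert (Hneg : forall w', (forall n, w' n <> 0) -> forall fa fb, (exists F, fill_ok (fun n => - w' n) a b (- fa) (- fb) F) ->
            exists F, fill_ok w' a b fa fb F).
  { intros w' Hw' fa' fb' [F (HF1 & HF2 & HF3 & HF4 & HF5)].
    exists (fun x => - F x). split; [|split; [|split; [|split]]].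
    - intro x. apply continuity_opp; auto.
    - rewrite HF2; ring.
    - rewrite HF3; ring.
    - intros x Hx. destruct (HF4 x Hx) as [O1 O2]. split.
      + intros Hn Hz. apply (O1 Hn). lra.
      + intros n Hn Hz. apply (O2 n Hn). lra.
    - intros x v Hx. specialize (HF5 x (- v) Hx).
      replace (- F x - v) with (- (F x - - v)) by ring. rewrite Rabs_Ropp.
      replace (- fa' - - v) with (- (fa' - v)) in HF5 by ring.
      replace (- fb' - - v) with (- (fb' - v)) in HF5 by ring.
      rewrite !Rabs_Ropp in HF5. auto. }
  assert (Hw2 : forall n, - w n <> 0) by (intros n Hn; apply (Hw n); lra).
  destruct (Rle_or_lt 0 fa); destruct (Rle_or_lt 0 fb).
  - destruct (filler_pos w a b fa fb) as [F [HF _]]; try lra. exists F; exact HF.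
  - destruct (Req_dec fa 0) as [->|Hfa].
    + apply Hneg; auto. destruct (filler_pos (fun n => - w n) a b (- 0) (- fb)) as [F [HF _]]; try lra.
      exists F; exact HF.
    + apply Hneg; auto. apply filler_cross; auto; lra.
  - destruct (Req_dec fb 0) as [->|Hfb].
    + apply Hneg; auto. destruct (filler_pos (fun n => - w n) a b (- fa) (- 0)) as [F [HF _]]; try lra.
      exists F; exact HF.
    + apply filler_cross; auto; lra.
  - apply Hneg; auto. destruct (filler_pos (fun n => - w n) a b (- fa) (- fb)) as [F [HF _]]; try lra.
    exists F; exact HF.
Qed.


Lemma ray (w : nat -> R) (Hw : forall n, w n <> 0) c f0 d : (d = 1 \/ d = -1) ->
  exists F, continuity F /\ F c = f0 /\ forall x, 0 < d * (x - c) -> okw w F x.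
Proof.
  intros Hd.
  set (s := if Rle_dec 0 f0 then 1 else -1).
  assert (Hs : (s = 1 /\ 0 <= f0) \/ (s = -1 /\ f0 < 0)) by (unfold s; destruct (Rle_dec 0 f0); [left|right]; split; auto; lra).
  destruct (avoid (fun n => (w n - f0) / (s * (d * (e n - c)))) 0 1) as [t [Ht Hu]]; [lra|].
  exists (fun x => f0 + s * t * (d * (x - c))). split; [|split].
  - reg.
  - ring.
  - intros x Hx. split.
    + intros _ Hz. destruct Hs as [[-> Hf]|[-> Hf]]; nra.
    + intros n Hn Heq. subst x. apply (Hu n).
      assert (s * (d * (e n - c)) <> 0) by (destruct Hs as [[-> _]|[-> _]]; nra).
      rewrite <- Heq. field. auto.
      repeat split; intro Z; apply H; rewrite Z; ring.
Qed.

Lemma left_ex (D : R -> Prop) x : closed_set D -> ~ D x -> (exists z, D z /\ z < x) ->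
  exists a, D a /\ a < x /\ forall z, D z -> z < x -> z <= a.
Proof.
  intros HD Hx [z0 [Dz0 Hz0]].
  destruct (completeness (fun z => D z /\ z < x)) as [a [Hub Hlub]].
  - exists x. intros z [_ Hz]. lra.
  - exists z0; auto.
  - assert (Hax : a <= x) by (apply Hlub; intros z [_ Hz]; lra).
    assert (Da : D a).
    { apply NNPP; intro Hna. destruct (HD a Hna) as [d Hd].
      assert (Hub' : is_upper_bound (fun z => D z /\ z < x) (a - d / 2)).
      { intros z [Dz Hz]. destruct (Rle_or_lt z (a - d / 2)) as [?|Hlt]; auto.
        exfalso. apply (Hd z); auto. unfold disc. pose proof (Hub z (conj Dz Hz)).
        pose proof (cond_pos d). apply Rabs_def1; lra. }
      pose proof (Hlub _ Hub'). pose proof (cond_pos d). lra. }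
    exists a. split; auto. split.
    + destruct (Req_dec a x) as [->|]; [contradiction|lra].
    + intros z Dz Hz. apply Hub; auto.
Qed.

Lemma closed_refl (D : R -> Prop) : closed_set D -> closed_set (fun y => D (- y)).
Proof.
  intros HD x Hx. destruct (HD (- x) Hx) as [d Hd]. exists d. intros y Hy.
  apply (Hd (- y)). unfold disc in *. replace (- y - - x) with (- (y - x)) by ring. rewrite Rabs_Ropp; auto.
Qed.

Lemma right_ex (D : R -> Prop) x : closed_set D -> ~ D x -> (exists z, D z /\ x < z) ->
  exists b, D b /\ x < b /\ forall z, D z -> x < z -> b <= z.
Proof.
  intros HD Hx [z0 [Dz0 Hz0]].
  destruct (left_ex (fun y => D (- y)) (- x) (closed_refl D HD)) as [a (Da & Ha & Hmax)].
  - rewrite Ropp_involutive; auto.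
  - exists (- z0). rewrite Ropp_involutive. split; auto; lra.
  - exists (- a). split; auto. split; [lra|]. intros z Dz Hz.
    assert (- z <= a) by (apply Hmax; [rewrite Ropp_involutive; auto|lra]). lra.
Qed.

Definition lspec (D : R -> Prop) x a := D a /\ a < x /\ forall z, D z -> z < x -> z <= a.
Definition rspec (D : R -> Prop) x b := D b /\ x < b /\ forall z, D z -> x < z -> b <= z.

Definition lft (D : R -> Prop) x : option R :=
  match excluded_middle_informative (exists a, lspec D x a) with
  | left H => Some (proj1_sig (constructive_indefinite_description _ H))
  | right _ => None end.
Definition rgt (D : R -> Prop) x : option R :=
  match excluded_middle_informative (exists b, rspec D x b) with
  | left H => Some (proj1_sig (constructive_indefinite_description _ H))
  | right _ => None end.

Lemma lspec_uniq D x a a' : lspec D x a -> lspec D x a' -> a = a'.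
Proof. intros (Da & Ha & Ma) (Da' & Ha' & Ma'). pose proof (Ma a' Da' Ha'). pose proof (Ma' a Da Ha). lra. Qed.
Lemma rspec_uniq D x a a' : rspec D x a -> rspec D x a' -> a = a'.
Proof. intros (Da & Ha & Ma) (Da' & Ha' & Ma'). pose proof (Ma a' Da' Ha'). pose proof (Ma' a Da Ha). lra. Qed.

Lemma lft_some D x a : lspec D x a -> lft D x = Some a.
Proof.
  intros Ha. unfold lft. destruct (excluded_middle_informative _) as [H|H]; [|exfalso; eauto].
  f_equal. apply (lspec_uniq D x); auto. exact (proj2_sig (constructive_indefinite_description _ H)).
Qed.
Lemma lft_spec D x a : lft D x = Some a -> lspec D x a.
Proof.
  unfold lft. destruct (excluded_middle_informative _) as [H|H]; [|discriminate].
  intros E; injection E; intros <-. exact (proj2_sig (constructive_indefinite_description _ H)).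
Qed.
Lemma lft_none D x : closed_set D -> ~ D x -> lft D x = None -> forall z, D z -> x <= z.
Proof.
  intros HD Hx. unfold lft. destruct (excluded_middle_informative _) as [H|H]; [discriminate|].
  intros _ z Dz. destruct (Rle_or_lt x z); auto. exfalso. apply H. apply left_ex; eauto.
Qed.
Lemma rgt_some D x a : rspec D x a -> rgt D x = Some a.
Proof.
  intros Ha. unfold rgt. destruct (excluded_middle_informative _) as [H|H]; [|exfalso; eauto].
  f_equal. apply (rspec_uniq D x); auto. exact (proj2_sig (constructive_indefinite_description _ H)).
Qed.
Lemma rgt_spec D x a : rgt D x = Some a -> rspec D x a.
Proof.
  unfold rgt. destruct (excluded_middle_informative _) as [H|H]; [|discriminate].
  intros E; injection E; intros <-. exact (proj2_sig (constructive_indefinite_description _ H)).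
Qed.
Lemma rgt_none D x : closed_set D -> ~ D x -> rgt D x = None -> forall z, D z -> z <= x.
Proof.
  intros HD Hx. unfold rgt. destruct (excluded_middle_informative _) as [H|H]; [discriminate|].
  intros _ z Dz. destruct (Rle_or_lt z x); auto. exfalso. apply H. apply right_ex; eauto.
Qed.

Lemma same_gap D x y : (forall z, D z -> ~ (Rmin x y <= z <= Rmax x y)) -> lft D x = lft D y /\ rgt D x = rgt D y.
Proof.
  intros Hno.
  assert (Hl : forall z, D z -> (z < x <-> z < y)).
  { intros z Dz. specialize (Hno z Dz). unfold Rmin, Rmax in Hno.
    destruct (Rle_dec x y); split; intro; apply NNPP; intro; apply Hno; split; lra. }
  assert (Hr : forall z, D z -> (x < z <-> y < z)).
  { intros z Dz. specialize (Hno z Dz). unfold Rmin, Rmax in Hno.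
    destruct (Rle_dec x y); split; intro; apply NNPP; intro; apply Hno; split; lra. }
  split.
  - unfold lft. destruct (excluded_middle_informative (exists a, lspec D x a)) as [H1|H1];
    destruct (excluded_middle_informative (exists a, lspec D y a)) as [H2|H2]; auto.
    + f_equal. apply (lspec_uniq D y).
      * pose proof (proj2_sig (constructive_indefinite_description _ H1)) as (A1 & A2 & A3).
        split; auto. split; [apply Hl; auto|]. intros z Dz Hz. apply A3; auto. apply Hl; auto.
      * exact (proj2_sig (constructive_indefinite_description _ H2)).
    + exfalso. apply H2. destruct H1 as [a (A1 & A2 & A3)]. exists a. split; auto.
      split; [apply Hl; auto|]. intros z Dz Hz. apply A3; auto. apply Hl; auto.
    + exfalso. apply H1. destruct H2 as [a (A1 & A2 & A3)]. exists a. split; auto.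
      split; [apply Hl; auto|]. intros z Dz Hz. apply A3; auto. apply Hl; auto.
  - unfold rgt. destruct (excluded_middle_informative (exists a, rspec D x a)) as [H1|H1];
    destruct (excluded_middle_informative (exists a, rspec D y a)) as [H2|H2]; auto.
    + f_equal. apply (rspec_uniq D y).
      * pose proof (proj2_sig (constructive_indefinite_description _ H1)) as (A1 & A2 & A3).
        split; auto. split; [apply Hr; auto|]. intros z Dz Hz. apply A3; auto. apply Hr; auto.
      * exact (proj2_sig (constructive_indefinite_description _ H2)).
    + exfalso. apply H2. destruct H1 as [a (A1 & A2 & A3)]. exists a. split; auto.
      split; [apply Hr; auto|]. intros z Dz Hz. apply A3; auto. apply Hr; auto.
    + exfalso. apply H1. destruct H2 as [a (A1 & A2 & A3)]. exists a. split; auto.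
      split; [apply Hr; auto|]. intros z Dz Hz. apply A3; auto. apply Hr; auto.
Qed.


Lemma h_ne n : h n <> 0.
Proof. pose proof (h_pos n); lra. Qed.

Lemma FB_ex (f : R -> R) a b : exists F, continuity F /\ (a < b -> fill_ok h a b (f a) (f b) F).
Proof.
  destruct (Rlt_dec a b) as [Hab|Hab].
  - destruct (filler h h_ne a b (f a) (f b) Hab) as [F HF]. exists F. split; [apply HF|auto].
  - exists (fun _ => 0). split; [reg|tauto].
Qed.
Definition FB f a b := proj1_sig (constructive_indefinite_description _ (FB_ex f a b)).
Lemma FB_cont f a b : continuity (FB f a b).
Proof. exact (proj1 (proj2_sig (constructive_indefinite_description _ (FB_ex f a b)))). Qed.
Lemma FB_ok f a b : a < b -> fill_ok h a b (f a) (f b) (FB f a b).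
Proof. exact (proj2 (proj2_sig (constructive_indefinite_description _ (FB_ex f a b)))). Qed.

Definition FR f a := proj1_sig (constructive_indefinite_description _ (ray h h_ne a (f a) 1 (or_introl eq_refl))).
Lemma FR_ok f a : continuity (FR f a) /\ FR f a a = f a /\ forall x, 0 < 1 * (x - a) -> okw h (FR f a) x.
Proof. exact (proj2_sig (constructive_indefinite_description _ (ray h h_ne a (f a) 1 (or_introl eq_refl)))). Qed.
Definition FL f a := proj1_sig (constructive_indefinite_description _ (ray h h_ne a (f a) (-1) (or_intror eq_refl))).
Lemma FL_ok f a : continuity (FL f a) /\ FL f a a = f a /\ forall x, 0 < -1 * (x - a) -> okw h (FL f a) x.
Proof. exact (proj2_sig (constructive_indefinite_description _ (ray h h_ne a (f a) (-1) (or_intror eq_refl)))). Qed.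

Definition Phi (f : R -> R) (oa ob : option R) : R -> R :=
  match oa, ob with
  | Some a, Some b => FB f a b
  | Some a, None => FR f a
  | None, Some b => FL f b
  | None, None => fun _ => -1
  end.

Lemma Phi_cont f oa ob : continuity (Phi f oa ob).
Proof.
  destruct oa; destruct ob; simpl.
  - apply FB_cont.
  - apply FR_ok.
  - apply FL_ok.
  - reg.
Qed.

Definition gext (D : R -> Prop) (f : R -> R) (x : R) : R :=
  match excluded_middle_informative (D x) with
  | left _ => f x
  | right _ => Phi f (lft D x) (rgt D x) x
  end.

Lemma gext_in D f x : D x -> gext D f x = f x.
Proof. intros H. unfold gext. destruct (excluded_middle_informative _); tauto. Qed.
Lemma gext_out D f x : ~ D x -> gext D f x = Phi f (lft D x) (rgt D x) x.
Proof. intros H. unfold gext. destruct (excluded_middle_informative _); tauto. Qed.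

Lemma gext_ok D f x : closed_set D -> ~ D x -> okw h (gext D f) x.
Proof.
  intros HD Hx. unfold okw. rewrite gext_out by auto. fold (okw h (Phi f (lft D x) (rgt D x)) x).
  destruct (lft D x) as [a|] eqn:El; destruct (rgt D x) as [b|] eqn:Er; simpl.
  - apply lft_spec in El as (_ & Ha & _). apply rgt_spec in Er as (_ & Hb & _).
    apply (FB_ok f a b ltac:(lra)). lra.
  - apply lft_spec in El as (_ & Ha & _). apply FR_ok. lra.
  - apply rgt_spec in Er as (_ & Hb & _). apply FL_ok. lra.
  - unfold okw. split; [intros _; lra|intros n _; pose proof (h_pos n); lra].
Qed.

Lemma gext_cont_out D f x : closed_set D -> ~ D x -> continuity_pt (gext D f) x.
Proof.
  intros HD Hx.
  set (dl := match lft D x with Some a => x - a | None => 1 end).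
  set (dr := match rgt D x with Some b => b - x | None => 1 end).
  assert (Hdl : 0 < dl) by (unfold dl; destruct (lft D x) eqn:E; [apply lft_spec in E as (_ & ? & _); lra|lra]).
  assert (Hdr : 0 < dr) by (unfold dr; destruct (rgt D x) eqn:E; [apply rgt_spec in E as (_ & ? & _); lra|lra]).
  apply (continuity_pt_locally_ext (Phi f (lft D x) (rgt D x)) _ (Rmin dl dr)).
  - apply Rmin_glb_lt; auto.
  - intros y Hy. unfold Rdist in Hy.
    pose proof (Rmin_l dl dr); pose proof (Rmin_r dl dr).
    assert (Hno : forall z, D z -> ~ (Rmin x y <= z <= Rmax x y)).
    { intros z Dz Hz. assert (Hzx : z <> x) by (intro; subst; auto).
      assert (Hz' : Rabs (z - x) < Rmin dl dr).
      { unfold Rmin, Rmax in Hz. destruct (Rle_dec x y);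
        revert Hy; unfold Rabs; repeat destruct (Rcase_abs _); intros; lra. }
      destruct (Rlt_or_le z x) as [Hlt|Hge].
      - destruct (lft D x) as [a|] eqn:El.
        + apply lft_spec in El as (_ & _ & Hm). specialize (Hm z Dz Hlt). unfold dl in *.
          revert Hz'; unfold Rabs; destruct (Rcase_abs _); intros; lra.
        + pose proof (lft_none D x HD Hx El z Dz). lra.
      - destruct (rgt D x) as [b|] eqn:Er.
        + apply rgt_spec in Er as (_ & _ & Hm). specialize (Hm z Dz ltac:(lra)). unfold dr in *.
          revert Hz'; unfold Rabs; destruct (Rcase_abs _); intros; lra.
        + pose proof (rgt_none D x HD Hx Er z Dz). lra. }
    destruct (same_gap D x y Hno) as [E1 E2].
    assert (Hy' : ~ D y).
    { intro Dy. apply (Hno y Dy). unfold Rmin, Rmax; destruct (Rle_dec x y); lra. }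
    rewrite gext_out by auto. rewrite E1, E2. auto.
  - apply Phi_cont.
Qed.

Lemma Rmax_lt a b c : a < c -> b < c -> Rmax a b < c.
Proof. intros; unfold Rmax; destruct (Rle_dec a b); lra. Qed.

Lemma gext_right D f y : closed_set D -> continuity f -> D y ->
  forall eps, 0 < eps -> exists d, 0 < d /\ forall x, y <= x < y + d -> Rabs (gext D f x - f y) < eps.
Proof.
  intros HD Hf Dy eps He.
  destruct (proj1 (cont_eps f y) (Hf y) (eps / 20)) as [d0 [Hd0 Hc]]; [lra|].
  set (dl := Rmin d0 (eps / 20)).
  assert (Hdl : 0 < dl) by (apply Rmin_glb_lt; lra).
  pose proof (Rmin_l d0 (eps / 20)); pose proof (Rmin_r d0 (eps / 20)). fold dl in H, H0.
  destruct (classic (exists d1, D d1 /\ y < d1 < y + dl)) as [[d1 [Dd1 Hd1]]|Hno].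
  - exists (d1 - y). split; [lra|]. intros x Hx.
    destruct (classic (D x)) as [Dx|Dx].
    + assert (Rabs (f x - f y) < eps/20) by (apply Hc; rewrite Rabs_right; lra). rewrite gext_in by auto. lra.
    + assert (Hyx : y < x) by (destruct (Req_dec y x); [subst; contradiction|lra]).
      destruct (left_ex D x HD Dx (ex_intro _ y (conj Dy Hyx))) as [a Ha].
      assert (Hxd : x < d1) by lra.
      destruct (right_ex D x HD Dx (ex_intro _ d1 (conj Dd1 Hxd))) as [b Hb].
      pose proof Ha as (Da & Hax & Ma). pose proof Hb as (Db & Hxb & Mb).
      pose proof (Ma y Dy Hyx). pose proof (Mb d1 Dd1 Hxd).
      rewrite gext_out, (lft_some D x a Ha), (rgt_some D x b Hb) by auto. simpl.
      destruct (FB_ok f a b ltac:(lra)) as (_ & _ & _ & _ & Hbd).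
      specialize (Hbd x (f y) ltac:(lra)).
      assert (Rabs (f a - f y) < eps / 20) by (apply Hc; rewrite Rabs_right; lra).
      assert (Rabs (f b - f y) < eps / 20) by (apply Hc; rewrite Rabs_right; lra).
      pose proof (Rmax_lt _ _ _ H3 H4). lra.
  - set (xs := y + dl / 2).
    assert (Hls : lft D xs = Some y).
    { apply lft_some. split; auto. split; [unfold xs; lra|]. intros z Dz Hz.
      destruct (Rle_or_lt z y); auto. exfalso. apply Hno. exists z. unfold xs in Hz. split; auto; lra. }
    set (Ph := Phi f (lft D xs) (rgt D xs)).
    assert (HPy : Ph y = f y).
    { unfold Ph. rewrite Hls. destruct (rgt D xs) as [b|] eqn:Er; simpl.
      - apply rgt_spec in Er as (_ & Hb & _). apply (FB_ok f y b). unfold xs in Hb; lra.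
      - apply FR_ok. }
    destruct (proj1 (cont_eps Ph y) (Phi_cont _ _ _ y) eps He) as [d1 [Hd1 Hc1]].
    exists (Rmin dl d1). split; [apply Rmin_glb_lt; auto|].
    pose proof (Rmin_l dl d1); pose proof (Rmin_r dl d1).
    intros x Hx. destruct (Req_dec x y) as [->|Hxy].
    + rewrite gext_in by auto. rewrite Rminus_diag, Rabs_R0; auto.
    + assert (Hno' : forall z, D z -> ~ (Rmin xs x <= z <= Rmax xs x)).
      { intros z Dz Hz. apply Hno. exists z. split; auto. unfold Rmin, Rmax, xs in *.
        destruct (Rle_dec (y + dl / 2) x); lra. }
      destruct (same_gap D xs x Hno') as [E1 E2].
      assert (Dx : ~ D x) by (intro Dx; apply Hno; exists x; split; auto; lra).
      rewrite gext_out by auto. rewrite <- E1, <- E2. fold Ph. rewrite <- HPy.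
      apply Hc1. rewrite Rabs_right; lra.
Qed.

Lemma gext_left D f y : closed_set D -> continuity f -> D y ->
  forall eps, 0 < eps -> exists d, 0 < d /\ forall x, y - d < x <= y -> Rabs (gext D f x - f y) < eps.
Proof.
  intros HD Hf Dy eps He.
  destruct (proj1 (cont_eps f y) (Hf y) (eps / 20)) as [d0 [Hd0 Hc]]; [lra|].
  set (dl := Rmin d0 (eps / 20)).
  assert (Hdl : 0 < dl) by (apply Rmin_glb_lt; lra).
  pose proof (Rmin_l d0 (eps / 20)); pose proof (Rmin_r d0 (eps / 20)). fold dl in H, H0.
  destruct (classic (exists d1, D d1 /\ y - dl < d1 < y)) as [[d1 [Dd1 Hd1]]|Hno].
  - exists (y - d1). split; [lra|]. intros x Hx.
    destruct (classic (D x)) as [Dx|Dx].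
    + assert (Rabs (f x - f y) < eps/20) by (apply Hc; rewrite Rabs_left1; lra). rewrite gext_in by auto. lra.
    + assert (Hyx : x < y) by (destruct (Req_dec y x); [subst; contradiction|lra]).
      assert (Hxd : d1 < x) by lra.
      destruct (left_ex D x HD Dx (ex_intro _ d1 (conj Dd1 Hxd))) as [a Ha].
      destruct (right_ex D x HD Dx (ex_intro _ y (conj Dy Hyx))) as [b Hb].
      pose proof Ha as (Da & Hax & Ma). pose proof Hb as (Db & Hxb & Mb).
      pose proof (Ma d1 Dd1 Hxd). pose proof (Mb y Dy Hyx).
      rewrite gext_out, (lft_some D x a Ha), (rgt_some D x b Hb) by auto. simpl.
      destruct (FB_ok f a b ltac:(lra)) as (_ & _ & _ & _ & Hbd).
      specialize (Hbd x (f y) ltac:(lra)).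
      assert (Rabs (f a - f y) < eps / 20) by (apply Hc; rewrite Rabs_left1; lra).
      assert (Rabs (f b - f y) < eps / 20) by (apply Hc; rewrite Rabs_left1; lra).
      pose proof (Rmax_lt _ _ _ H3 H4). lra.
  - set (xs := y - dl / 2).
    assert (Hrs : rgt D xs = Some y).
    { apply rgt_some. split; auto. split; [unfold xs; lra|]. intros z Dz Hz.
      destruct (Rle_or_lt y z); auto. exfalso. apply Hno. exists z. unfold xs in Hz. split; auto; lra. }
    set (Ph := Phi f (lft D xs) (rgt D xs)).
    assert (HPy : Ph y = f y).
    { unfold Ph. rewrite Hrs. destruct (lft D xs) as [a|] eqn:El; simpl.
      - apply lft_spec in El as (_ & Ha & _). apply (FB_ok f a y). unfold xs in Ha; lra.
      - apply FL_ok. }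
    destruct (proj1 (cont_eps Ph y) (Phi_cont _ _ _ y) eps He) as [d1 [Hd1 Hc1]].
    exists (Rmin dl d1). split; [apply Rmin_glb_lt; auto|].
    pose proof (Rmin_l dl d1); pose proof (Rmin_r dl d1).
    intros x Hx. destruct (Req_dec x y) as [->|Hxy].
    + rewrite gext_in by auto. rewrite Rminus_diag, Rabs_R0; auto.
    + assert (Hno' : forall z, D z -> ~ (Rmin xs x <= z <= Rmax xs x)).
      { intros z Dz Hz. apply Hno. exists z. split; auto. unfold Rmin, Rmax, xs in *.
        destruct (Rle_dec (y - dl / 2) x); lra. }
      destruct (same_gap D xs x Hno') as [E1 E2].
      assert (Dx : ~ D x) by (intro Dx; apply Hno; exists x; split; auto; lra).
      rewrite gext_out by auto. rewrite <- E1, <- E2. fold Ph. rewrite <- HPy.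
      apply Hc1. rewrite Rabs_left1; lra.
Qed.

Lemma gext_cont D f : closed_set D -> continuity f -> continuity (gext D f).
Proof.
  intros HD Hf y. destruct (classic (D y)) as [Dy|Dy]; [|apply gext_cont_out; auto].
  apply cont_eps. intros eps He.
  destruct (gext_right D f y HD Hf Dy eps He) as [d1 [Hd1 H1]].
  destruct (gext_left D f y HD Hf Dy eps He) as [d2 [Hd2 H2]].
  exists (Rmin d1 d2). split; [apply Rmin_glb_lt; auto|].
  pose proof (Rmin_l d1 d2); pose proof (Rmin_r d1 d2).
  intros x Hx. rewrite (gext_in D f y Dy).
  destruct (Rle_or_lt y x).
  - apply H1. rewrite Rabs_right in Hx; lra.
  - apply H2. rewrite Rabs_left in Hx; lra.
Qed.


Theorem theorem2p5 (Ecal : (R -> Prop) -> Prop) :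
  fam_in_CL Ecal -> hereditary Ecal ->
  exists G : (R -> R) -> Prop, fam_in_C G /\ least_in_K_G G Ecal.
Proof.
  intros HCL Hher.
  set (G := fun g => is_C g /\ exists D, Ecal D /\ forall x, ~ D x -> okpt g x).
  assert (Hmatch : forall D, Ecal D -> forall f, is_C f -> exists g, G g /\ forall x, D x -> f x = g x).
  { intros D ED f Hf. exists (gext D f). split.
    - split; [apply gext_cont; auto; apply HCL; auto|].
      exists D. split; auto. intros x Hx. exact (gext_ok D f x (HCL D ED) Hx).
    - intros x Dx. rewrite gext_in; auto. }
  exists G. split; [intros g [Hg _]; auto|]. split.
  - split; auto. exists is_C. split; [intros f Hf; auto|].
    intros E HE. split.
    + intros EE. split; auto. intros f Hf. split; auto.
    + intros [_ H]. apply NNPP; intro nE.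
      destruct (H (fE E) (fE_cont E)) as (_ & _ & g & [Gc [D [ED Hok]]] & Hag).
      apply (reject E D g HE (HCL D ED)); auto.
      * apply NNPP; intro Hn. apply nE. apply (Hher E D HE (HCL D ED)); auto.
        intros x Ex. apply NNPP; intro Dx. apply Hn. exists x; auto.
  - intros B [_ [F [HF Heq]]] E EE. apply (Heq E (HCL E EE)).
    split; [apply HCL; auto|]. intros f Hf. split; [apply HF; auto|]. split; [apply HCL; auto|].
    apply Hmatch; auto.
Qed.
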